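(* Let $V$ be a finite dimensional vector space over a field $\mathbb{K}$ of characteristic zero, and let $z$ be an element of $V\setminus\{0\}$ or of $\wedge^2V\setminus\{0\}$. Then $$\{u\in\widehat T\otimes\widehat T:\ [\Delta z,u]=0\}=\mathbb{K}[[z]]\otimes\mathbb{K}[[z]].$$
   Context: $\widehat T=\widehat T(V)=\prod_{m\ge0}V^{\otimes m}$ is the completed tensor algebra, with coproduct $\Delta$ for which elements of $V$ are primitive, so $\Delta z=z\otimes1+1\otimes z$; $\wedge^2V$ is viewed inside $V^{\otimes2}$ as antisymmetric tensors. Tensor products of completed algebras are the completed tensor products, and $\mathbb{K}[[z]]\subset\widehat T$ is the set of series $\sum_k c_kz^k$, $c_k\in\mathbb{K}$. *)

(* Defs.v *)
From mathcomp Require Import all_boot all_order all_algebra.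
Set Implicit Arguments. Unset Strict Implicit. Unset Printing Implicit Defensive.
Import GRing.Theory.
Local Open Scope ring_scope.

(* V = K^d with fixed basis e_0..e_(d-1).  V^{(x)m} has basis the words of
   length m over 'I_d, so the completed tensor algebra
   T^ = prod_m V^{(x)m} is identified with functions  word d -> K
   (coefficient of each basis tensor), and the completed tensor product
   T^ (x)^ T^ = prod_(m,n) V^{(x)m} (x) V^{(x)n} with functions
   word d -> word d -> K. *)

Definition word (d : nat) := seq 'I_d.
Definition tser (K : fieldType) (d : nat) := word d -> K.
Definition tser2 (K : fieldType) (d : nat) := word d -> word d -> K.

Definition tone (K : fieldType) (d : nat) : tser K d := fun w => (size w == 0)%N%:R.

Definition tmul (K : fieldType) d (f g : tser K d) : tser K d :=
  fun w => \sum_(i < (size w).+1) f (take i w) * g (drop i w).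

Definition texp (K : fieldType) d (f : tser K d) (k : nat) : tser K d :=
  iter k (tmul f) (@tone K d).

Definition tmul2 (K : fieldType) d (f g : tser2 K d) : tser2 K d :=
  fun w1 w2 => \sum_(i < (size w1).+1) \sum_(j < (size w2).+1)
     f (take i w1) (take j w2) * g (drop i w1) (drop j w2).

Definition tcomm2 (K : fieldType) d (f g : tser2 K d) : tser2 K d :=
  fun w1 w2 => tmul2 f g w1 w2 - tmul2 g f w1 w2.

Definition Delta_prim (K : fieldType) d (z : tser K d) : tser2 K d :=
  fun w1 w2 => z w1 * @tone K d w2 + @tone K d w1 * z w2.

Definition in_V_nonzero (K : fieldType) d (z : tser K d) : Prop :=
  (forall w, size w != 1%N -> z w = 0) /\ (exists w, z w != 0).

(* z is a nonzero element of /\^2 V, viewed inside V^{(x)2} as antisymmetric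
   tensors *)
Definition in_wedge2_nonzero (K : fieldType) d (z : tser K d) : Prop :=
  (forall w, size w != 2%N -> z w = 0) /\
  (forall i j : 'I_d, z [:: i; j] = - z [:: j; i]) /\
  (exists w, z w != 0).

(* u lies in K[[z]] (x)^ K[[z]] : u = sum_(k,l) c_(k,l) z^k (x) z^l.
   Since z has positive degree, only k <= |w1|, l <= |w2| contribute
   to the coefficient at (w1,w2). *)
Definition in_powser_tensor (K : fieldType) d (z : tser K d) (u : tser2 K d)
  : Prop :=
  exists c : nat -> nat -> K, forall w1 w2 : word d,
    u w1 w2 = \sum_(k < (size w1).+1) \sum_(l < (size w2).+1)
                 c k l * texp z k w1 * texp z l w2.

(* Main.v *)
Require Import Defs.
From mathcomp Require Import all_boot all_order all_algebra.
From mathcomp Require Import zify ring.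
Set Implicit Arguments. Unset Strict Implicit. Unset Printing Implicit Defensive.
Import GRing.Theory.
Local Open Scope ring_scope.

Lemma sum_one (K : fieldType) n (F : nat -> K) i0 : (i0 <= n)%N ->
  (forall i, (i <= n)%N -> i != i0 -> F i = 0) ->
  \sum_(i < n.+1) F i = F i0.
Proof.
move=> Hi0 HF; rewrite (bigD1 (inord i0)) //= big1 ?addr0 ?inordK //.
move=> i Hi; apply: HF; first by rewrite -ltnS.
by apply: contra Hi => /eqP Hi; apply/eqP/val_inj; rewrite /= inordK // Hi.
Qed.

Section Main.
Variables (K : fieldType) (d : nat) (z : tser K d) (e : nat).
Hypothesis He : (0 < e)%N.
Hypothesis Hz : forall w : word d, size w != e -> z w = 0.

Definition Lf (f : tser K d) (x : word d) := z (take e x) * f (drop e x).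
Definition Rf (f : tser K d) (x : word d) :=
  f (take (size x - e) x) * z (drop (size x - e) x).

Lemma tmul_zl f x : tmul z f x = Lf f x.
Proof.
rewrite /tmul /Lf.
case: (leqP e (size x)) => Hx.
  rewrite (@sum_one _ _ (fun i => z (take i x) * f (drop i x)) e) //.
  move=> i Hi Hie; rewrite Hz ?mul0r // size_takel //.
rewrite (take_oversize (ltnW Hx)) Hz ?mul0r; last by rewrite neq_ltn Hx.
rewrite big1 // => i _; rewrite Hz ?mul0r // size_take_min.
apply: contraTneq Hx => <-; rewrite -leqNgt; exact: geq_minr.
Qed.

Lemma tmul_zr f x : tmul f z x = Rf f x.
Proof.
rewrite /tmul /Rf.
case: (leqP e (size x)) => Hx.
  rewrite (@sum_one _ _ (fun i => f (take i x) * z (drop i x)) (size x - e)) ?leq_subr //.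
  move=> i Hi Hie; rewrite (@Hz (drop _ _)) ?mulr0 // size_drop.
  apply: contra Hie => /eqP <-; apply/eqP; lia.
have -> : (size x - e = 0)%N by lia.
rewrite drop0 (@Hz x) ?mulr0; last by rewrite neq_ltn Hx.
rewrite big1 // => i Hi; rewrite (@Hz (drop _ _)) ?mulr0 // size_drop.
have := ltn_ord i; lia.
Qed.

Definition T k := texp z k.

Lemma T0 x : T 0 x = (size x == 0)%N%:R.
Proof. by []. Qed.

Lemma TS k x : T k.+1 x = Lf (T k) x.
Proof. by rewrite -tmul_zl. Qed.

Lemma Tsize k x : size x != (e * k)%N -> T k x = 0.
Proof.
elim: k x => [|k IH] x Hx; first by rewrite T0; move: Hx; rewrite muln0 => /negbTE ->.
rewrite TS /Lf.
case: (leqP e (size x)) => Hle.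
  rewrite IH ?mulr0 // size_drop; apply: contra Hx => /eqP H; apply/eqP; lia.
by rewrite Hz ?mul0r // size_take_min; apply/eqP; lia.
Qed.

Lemma LT0 x : Lf (T 0) x = z x.
Proof.
rewrite /Lf T0 size_drop.
case: (leqP (size x) e) => H.
  by rewrite take_oversize // subn_eq0 H mulr1.
rewrite (@Hz x) ?mulr0 //; last by rewrite neq_ltn H orbT.
by rewrite subn_eq0 leqNgt H mulr0.
Qed.

Lemma RT0 x : Rf (T 0) x = z x.
Proof.
rewrite /Rf T0 size_takel ?leq_subr //.
case: (leqP (size x) e) => H.
  by move: (H); rewrite -subn_eq0 => /eqP ->; rewrite drop0 mul1r.
rewrite (@Hz x) ?mul0r //; last by rewrite neq_ltn H orbT.
by rewrite subn_eq0 leqNgt H mul0r.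
Qed.

Lemma LR_comm f x : Lf (Rf f) x = Rf (Lf f) x.
Proof.
rewrite /Lf /Rf /= size_drop.
case: (ltnP (size x) (e + e)) => H.
  have -> : z (take e (take (size x - e) x)) = 0.
    rewrite Hz // !size_take_min; apply/eqP; lia.
  rewrite !mul0r.
  case: (ltnP (size x) e) => H2.
    by rewrite (@Hz (take e x)) ?mul0r // size_take_min; apply/eqP; lia.
  have -> : (size x - e - e = 0)%N by lia.
  rewrite drop0 (@Hz (drop e x)) ?mulr0 // size_drop; apply/eqP; lia.
rewrite take_takel; last lia.
rewrite -[X in drop e (take X x)](_ : (size x - e - e + e = size x - e)%N); last lia.
rewrite -take_drop drop_drop.
rewrite (_ : (size x - e - e + e = size x - e)%N); last lia.
by rewrite mulrA.
Qed.

Lemma TR k x : T k.+1 x = Rf (T k) x.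
Proof.
elim: k x => [|k IH] x; first by rewrite TS LT0 RT0.
rewrite TS.
have -> : Lf (T k.+1) x = Lf (Rf (T k)) x.
  by rewrite /Lf IH.
rewrite LR_comm /Rf; congr (_ * _); by rewrite TS.
Qed.


Lemma Lf_eq h1 h2 x : (forall v, size v = (size x - e)%N -> h1 v = h2 v) ->
  Lf h1 x = Lf h2 x.
Proof. by move=> H; rewrite /Lf H // size_drop. Qed.

Lemma Rf_eq h1 h2 x : (forall v, size v = (size x - e)%N -> h1 v = h2 v) ->
  Rf h1 x = Rf h2 x.
Proof. by move=> H; rewrite /Rf H // size_takel // leq_subr. Qed.

Lemma LR_zero g y :
  ((e <= size y)%N -> forall v, size v = (size y - e)%N -> g v = 0) ->
  Lf g y = 0 /\ Rf g y = 0.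
Proof.
move=> H; case: (leqP e (size y)) => Hy.
  by rewrite /Lf /Rf !H ?mulr0 ?mul0r // ?size_drop // size_takel // leq_subr.
rewrite /Lf /Rf.
have -> : (size y - e = 0)%N by lia.
rewrite drop0 take_oversize ?(ltnW Hy) // (@Hz y) ?mulr0 ?mul0r //.
by rewrite neq_ltn Hy.
Qed.

Lemma tone_nil : @tone K d [::] = 1.
Proof. by rewrite /tone /=. Qed.

Lemma DeltaL u w1 w2 : tmul2 (Delta_prim z) u w1 w2 =
  Lf (fun x => u x w2) w1 + Lf (u w1) w2.
Proof.
rewrite -!tmul_zl /tmul2 /tmul /Delta_prim.
under eq_bigr => i _ do under eq_bigr => j _ do rewrite mulrDl.
under eq_bigr => i _ do rewrite big_split /=.
rewrite big_split /=; congr (_ + _).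
  apply: eq_bigr => i _; rewrite big_ord_recl /= take0 drop0 tone_nil mulr1.
  rewrite big1 ?addr0 // => j _.
  rewrite /tone size_take_min /bump /=.
  have -> : minn j.+1 (size w2) = j.+1 by have := ltn_ord j; lia.
  by rewrite mulr0 mul0r.
rewrite big_ord_recl /= take0 drop0 tone_nil.
under eq_bigr => j _ do rewrite mul1r.
rewrite [X in _ + X]big1 ?addr0 // => i _.
rewrite big1 // => j _.
rewrite /tone size_take_min /bump /=.
have -> : minn i.+1 (size w1) = i.+1 by have := ltn_ord i; lia.
by rewrite !mul0r.
Qed.

Lemma DeltaR u w1 w2 : tmul2 u (Delta_prim z) w1 w2 =
  Rf (fun x => u x w2) w1 + Rf (u w1) w2.
Proof.
rewrite -!tmul_zr /tmul2 /tmul /Delta_prim.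
under eq_bigr => i _ do under eq_bigr => j _ do rewrite mulrDr.
under eq_bigr => i _ do rewrite big_split /=.
rewrite big_split /=; congr (_ + _).
  apply: eq_bigr => i _; rewrite big_ord_recr /= take_size drop_size tone_nil mulr1.
  rewrite big1 ?add0r // => j _.
  rewrite /tone size_drop.
  have -> : (size w2 - j == 0)%N = false by have := ltn_ord j; lia.
  by rewrite !mulr0.
rewrite big_ord_recr /= take_size drop_size tone_nil [X in X + _]big1 ?add0r.
  by apply: eq_bigr => j _; rewrite mul1r.
move=> i _.
rewrite big1 // => j _.
rewrite /tone size_drop.
have -> : (size w1 - i == 0)%N = false by have := ltn_ord i; lia.
by rewrite !mul0r mulr0.
Qed.


Definition comm (u : tser2 K d) := forall x y,
  Lf (fun a => u a y) x + Lf (u x) y = Rf (fun a => u a y) x + Rf (u x) y.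

Lemma comm_of u :
  (forall w1 w2, tcomm2 (Delta_prim z) u w1 w2 = 0) <-> comm u.
Proof.
split => H x y.
  by move/eqP: (H x y); rewrite /tcomm2 DeltaL DeltaR subr_eq0 => /eqP.
by apply/eqP; rewrite /tcomm2 DeltaL DeltaR subr_eq0; apply/eqP; apply: H.
Qed.

Lemma collapse x N (G : nat -> K) : (size x < N)%N ->
  (forall k, T k x = 0 -> G k = 0) -> \sum_(k < N) G k = G ((size x %/ e)%N).
Proof.
case: N => [|N] // HN HG.
rewrite (@sum_one _ _ G ((size x %/ e)%N)) //.
  exact: leq_trans (leq_div _ _) _.
move=> i Hi Hne; apply: HG; apply: Tsize.
apply: contra Hne => /eqP ->; by rewrite mulKn.
Qed.

Definition vfun (c : nat -> nat -> K) (x y : word d) :=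
  c ((size x %/ e)%N) ((size y %/ e)%N) * T ((size x %/ e)%N) x * T ((size y %/ e)%N) y.

Lemma vW c x y N : (size x < N)%N -> (size y < N)%N ->
  vfun c x y = \sum_(k < N) \sum_(l < N) c k l * T k x * T l y.
Proof.
move=> Hx Hy.
rewrite (eq_bigr (fun k : 'I_N => c k ((size y %/ e)%N) * T k x * T ((size y %/ e)%N) y)).
  rewrite (@collapse x N (fun k => c k ((size y %/ e)%N) * T k x * T ((size y %/ e)%N) y)) //.
  by move=> k ->; rewrite mulr0 mul0r.
move=> k _.
rewrite (@collapse y N (fun l => c k l * T k x * T l y)) //.
by move=> l ->; rewrite mulr0.
Qed.

Lemma vL1 c x y : Lf (fun a => vfun c a y) x =
  \sum_(k < (size x + size y).+1) \sum_(l < (size x + size y).+1)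
     c k l * T k.+1 x * T l y.
Proof.
rewrite /Lf (@vW c _ _ (size x + size y).+1); last 2 first.
- rewrite size_drop; lia.
- lia.
rewrite mulr_sumr; apply: eq_bigr => k _; rewrite mulr_sumr; apply: eq_bigr => l _.
by rewrite TS /Lf; ring.
Qed.

Lemma vR1 c x y : Rf (fun a => vfun c a y) x =
  \sum_(k < (size x + size y).+1) \sum_(l < (size x + size y).+1)
     c k l * T k.+1 x * T l y.
Proof.
rewrite /Rf (@vW c _ _ (size x + size y).+1); last 2 first.
- rewrite size_takel ?leq_subr //; lia.
- lia.
rewrite mulr_suml; apply: eq_bigr => k _; rewrite mulr_suml; apply: eq_bigr => l _.
by rewrite TR /Rf; ring.
Qed.

Lemma vL2 c x y : Lf (vfun c x) y =
  \sum_(k < (size x + size y).+1) \sum_(l < (size x + size y).+1)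
     c k l * T k x * T l.+1 y.
Proof.
rewrite /Lf (@vW c _ _ (size x + size y).+1); last 2 first.
- lia.
- rewrite size_drop; lia.
rewrite mulr_sumr; apply: eq_bigr => k _; rewrite mulr_sumr; apply: eq_bigr => l _.
by rewrite TS /Lf; ring.
Qed.

Lemma vR2 c x y : Rf (vfun c x) y =
  \sum_(k < (size x + size y).+1) \sum_(l < (size x + size y).+1)
     c k l * T k x * T l.+1 y.
Proof.
rewrite /Rf (@vW c _ _ (size x + size y).+1); last 2 first.
- lia.
- rewrite size_takel ?leq_subr //; lia.
rewrite mulr_suml; apply: eq_bigr => k _; rewrite mulr_suml; apply: eq_bigr => l _.
by rewrite TR /Rf; ring.
Qed.

Lemma comm_v c : comm (vfun c).
Proof. by move=> x y; rewrite vL1 vR1 vL2 vR2. Qed.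

Lemma double_collapse (c : nat -> nat -> K) x y :
  \sum_(k < (size x).+1) \sum_(l < (size y).+1) c k l * texp z k x * texp z l y
  = vfun c x y.
Proof.
rewrite (eq_bigr (fun k : 'I_(size x).+1 => c k ((size y %/ e)%N) * T k x * T ((size y %/ e)%N) y)).
  rewrite (@collapse x _ (fun k => c k ((size y %/ e)%N) * T k x * T ((size y %/ e)%N) y)) //.
  by move=> k ->; rewrite mulr0 mul0r.
move=> k _.
rewrite (@collapse y _ (fun l => c k l * T k x * T l y)) //.
by move=> l ->; rewrite mulr0.
Qed.


Section Omega.
Variable w0 : word d.
Hypothesis Hw0 : size w0 = e.
Hypothesis Hzw : z w0 != 0.
Hypothesis Hsmall : forall m f, (0 < m < e)%N ->
  (forall x, size x = (m + e)%N -> Lf f x = Rf f x) ->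
  forall x, size x = m -> f x = 0.

Lemma Lf_cat f s : Lf f (w0 ++ s) = z w0 * f s.
Proof. by rewrite /Lf -Hw0 take_size_cat // drop_size_cat. Qed.

Lemma Rf_cat f s : Rf f (s ++ w0) = f s * z w0.
Proof. by rewrite /Rf size_cat Hw0 addnK take_size_cat // drop_size_cat. Qed.

Lemma Rf_lcat f s : (e <= size s)%N -> Rf f (w0 ++ s) = Rf (fun v => f (w0 ++ v)) s.
Proof.
move=> H; rewrite /Rf size_cat Hw0 addKn take_cat drop_cat Hw0 ltnNge H /=.
by [].
Qed.

Lemma Lf_rcat f s : (e <= size s)%N -> Lf f (s ++ w0) = Lf (fun v => f (v ++ w0)) s.
Proof.
move=> H; rewrite /Lf takel_cat // drop_cat.
case: ltnP => H' //.
have He' : size s = e by apply/eqP; rewrite eqn_leq H' H.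
by rewrite He' subnn drop0 drop_oversize ?He'.
Qed.

Fixpoint pw k := if k is k'.+1 then w0 ++ pw k' else [::].

Lemma size_pw k : size (pw k) = (e * k)%N.
Proof. elim: k => [|k IH] /=; first by rewrite muln0. by rewrite size_cat IH Hw0 mulnS. Qed.

Lemma pwS k : pw k.+1 = pw k ++ w0.
Proof. elim: k => [|k IH] //=; first by rewrite cats0. by rewrite -catA -IH. Qed.

Lemma T_pw k : T k (pw k) = z w0 ^+ k.
Proof. elim: k => [|k IH]; first exact: tone_nil. by rewrite TS {1}/pw -/pw Lf_cat IH exprS. Qed.

Lemma pw_LR f k : Lf f (pw k) = Rf f (pw k).
Proof.
case: k => [|k].
  rewrite /Lf /Rf /= (@Hz [::]) ?mul0r ?mulr0 //; by rewrite eq_sym -lt0n He.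
by rewrite {1}/pw -/pw Lf_cat pwS Rf_cat mulrC.
Qed.

Lemma SF m f : (forall x, size x = (m + e)%N -> Lf f x = Rf f x) ->
  exists a, forall x, size x = m -> f x = a * T (m %/ e)%N x.
Proof.
elim/ltn_ind: m f => m IH f Hf.
case: (posnP m) => [Hm0 | Hm].
  exists (f [::]) => x; rewrite Hm0 => /size0nil ->.
  by rewrite div0n (_ : T 0 [::] = 1) ?mulr1 //; exact: tone_nil.
case: (ltnP m e) => Hme.
  by exists 0 => x Hx; rewrite mul0r; apply: (Hsmall _ Hf) => //; rewrite Hm Hme.
pose g v := f (w0 ++ v) / z w0.
have Hiii : forall v, size v = (m - e)%N -> f (v ++ w0) = f (w0 ++ v).
  move=> v Hv; have H := Hf (w0 ++ (v ++ w0)).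
  rewrite Lf_cat catA Rf_cat mulrC in H.
  by apply: (mulIf Hzw); apply: H; rewrite !size_cat Hv Hw0; lia.
have Hi : forall x, size x = m -> f x = Rf g x.
  move=> x Hx; have H := Hf (w0 ++ x).
  rewrite Lf_cat Rf_lcat ?Hx // in H.
  rewrite /Rf /g mulrAC -/(Rf (fun v => f (w0 ++ v)) x) -H; last by rewrite size_cat Hx Hw0 addnC.
  by rewrite mulrC mulKf.
have Hii : forall x, size x = m -> f x = Lf g x.
  move=> x Hx; have H := Hf (x ++ w0).
  rewrite Lf_rcat ?Hx // Rf_cat in H.
  rewrite /Lf /g mulrA -/(Lf (fun v => f (w0 ++ v)) x).
  rewrite -(@Lf_eq (fun v => f (v ++ w0))); last by move=> v Hv; apply: Hiii; rewrite Hv Hx.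
  by rewrite H ?mulfK // size_cat Hx Hw0.
have [a Ha] := IH (m - e)%N ltac:(lia) g (fun x Hx => ltac:(rewrite subnK in Hx => //; by rewrite -Hii // -Hi)).
exists a => x Hx.
rewrite Hi // (@Rf_eq _ (fun v => a * T ((m - e) %/ e)%N v)); last first.
  by move=> v Hv; apply: Ha; rewrite Hv Hx.
rewrite /Rf -mulrA -/(Rf (T ((m - e) %/ e)%N) x) -TR.
have -> : (m %/ e)%N = ((m - e) %/ e).+1 by rewrite -{1}(subnK Hme) divnDr ?dvdnn // divnn He addn1.
by [].
Qed.

Lemma step u (Hu : comm u) (H0 : forall k l, u (pw k) (pw l) = 0) p q :
  (forall x y, (size x + size y = p + q)%N -> (p < size x)%N -> u x y = 0) ->
  forall x y, size x = p -> size y = q -> u x y = 0.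
Proof.
move=> IHp.
have HA : forall y, size y = q -> exists a, forall x, size x = p -> u x y = a * T (p %/ e)%N x.
  move=> y Hy; apply: SF => x Hx.
  have := Hu x y.
  have [HL HR] := @LR_zero (u x) y (fun Hey v Hv => IHp x v ltac:(lia) ltac:(lia)).
  by rewrite HL HR !addr0.
case: (boolP (e %| p)%N) => Hep; last first.
  move=> x y Hx Hy; have [a Ha] := HA y Hy; rewrite Ha // Tsize ?mulr0 // Hx.
  by apply: contra Hep => /eqP ->; apply: dvdn_mulr; apply: dvdnn.
have Hpk : p = (e * (p %/ e))%N by rewrite mulnC divnK.
move: (p %/ e)%N Hpk HA => k Hpk HA.
pose a y := u (pw k) y / z w0 ^+ k.
have Hzk : z w0 ^+ k != 0 by rewrite expf_neq0.
have Ha : forall x y, size x = p -> size y = q -> u x y = a y * T k x.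
  move=> x y Hx Hy; have [b Hb] := HA y Hy.
  rewrite Hb // /a Hb ?size_pw // T_pw mulfK //.
have HaLR : forall y, Lf a y = Rf a y.
  move=> y; have := Hu (pw k) y; rewrite pw_LR => /addrI H.
  by rewrite /a /Lf /Rf mulrA [RHS]mulrAC; rewrite /Lf /Rf in H; rewrite H.
have [b Hb] := @SF q a (fun y _ => HaLR y).
have Hb0 : forall y, size y = q -> a y = 0.
  case: (boolP (e %| q)%N) => Heq; last first.
    move=> y Hy; rewrite Hb // Tsize ?mulr0 // Hy.
    by apply: contra Heq => /eqP ->; apply: dvdn_mulr; apply: dvdnn.
  have Hql : q = (e * (q %/ e))%N by rewrite mulnC divnK.
  have : a (pw (q %/ e)%N) = 0 by rewrite /a H0 mul0r.
  rewrite Hb ?size_pw // T_pw => /eqP; rewrite mulf_eq0 expf_eq0 (negbTE Hzw) andbF orbF.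
  by move=> /eqP Hb0 y Hy; rewrite Hb // Hb0 mul0r.
by move=> x y Hx Hy; rewrite Ha // Hb0 // mul0r.
Qed.

Lemma kernel_zero u : comm u -> (forall k l, u (pw k) (pw l) = 0) ->
  forall x y, u x y = 0.
Proof.
move=> Hu H0.
suff H : forall t n x y, (size x + size y = n)%N -> (n < size x + t)%N -> u x y = 0.
  move=> x y; apply: (H (size y).+1 (size x + size y)) => //; lia.
elim=> [|t IH] n x y Hn Ht; first lia.
case: (ltnP n (size x + t)) => Hlt; first exact: IH Hlt.
apply: (@step u Hu H0 (size x) (size y)) => // x' y' Hs Hp.
apply: (IH n) => //; lia.
Qed.

Lemma forward u : comm u -> in_powser_tensor z u.
Proof.
move=> Hu.
pose c k l := u (pw k) (pw l) / (z w0 ^+ k * z w0 ^+ l).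
have Hv := comm_v c.
pose u' x y := u x y - vfun c x y.
have Hu' : comm u'.
  move=> x y; have := Hu x y; have := Hv x y.
  rewrite /u' /Lf /Rf /= => H1 H2.
  apply/eqP; rewrite -subr_eq0; apply/eqP.
  transitivity ((z (take e x) * u (drop e x) y + z (take e y) * u x (drop e y) -
    (u (take (size x - e) x) y * z (drop (size x - e) x) +
     u x (take (size y - e) y) * z (drop (size y - e) y))) -
    (z (take e x) * vfun c (drop e x) y + z (take e y) * vfun c x (drop e y) -
    (vfun c (take (size x - e) x) y * z (drop (size x - e) x) +
     vfun c x (take (size y - e) y) * z (drop (size y - e) y)))); first ring.
  by rewrite H1 H2 !subrr.
have H0 : forall k l, u' (pw k) (pw l) = 0.
  move=> k l; rewrite /u' /vfun !size_pw !mulKn // !T_pw /c.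
  by rewrite -mulrA divfK ?subrr // mulf_neq0 // expf_neq0.
exists c => w1 w2.
rewrite double_collapse; apply/eqP; rewrite -subr_eq0; apply/eqP.
exact: (kernel_zero Hu' H0).
Qed.

End Omega.

End Main.

Lemma backward (K : fieldType) (d : nat) (z : tser K d) e (He : (0 < e)%N)
  (Hz : forall w : word d, size w != e -> z w = 0) u :
  in_powser_tensor z u -> comm z e u.
Proof.
move=> [c Hc].
have Hc' : forall a b, u a b = vfun z e c a b.
  by move=> a b; rewrite Hc (double_collapse He Hz).
move=> x y; have := comm_v He Hz c x y.
by rewrite /Lf /Rf !Hc'.
Qed.

Theorem lemma3p6 (K : fieldType) (d : nat) (z : tser K d) :
  [pchar K] =i pred0 ->
  (in_V_nonzero z \/ in_wedge2_nonzero z) ->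
  forall u : tser2 K d,
    (forall w1 w2, tcomm2 (Delta_prim z) u w1 w2 = 0) <-> in_powser_tensor z u.
Proof.
move=> Hchar Hcase u.
have [e [He [Hz [w0 [Hw0 [Hzw Hsmall]]]]]] : exists e, (0 < e)%N /\
  (forall w : word d, size w != e -> z w = 0) /\ exists w0 : word d,
  size w0 = e /\ z w0 != 0 /\
  (forall m f, (0 < m < e)%N ->
    (forall x, size x = (m + e)%N -> Lf z e f x = Rf z e f x) ->
    forall x, size x = m -> f x = 0).
  case: Hcase => [[Hz [w Hw]] | [Hz [Hanti [w Hw]]]].
    have /eqP Hs : size w == 1%N.
      by apply/negPn/negP => /Hz Hzw0; rewrite Hzw0 eqxx in Hw.
    exists 1%N; split => //; split => //; exists w; split => //; split => //.
    by move=> m f /andP [H1 H2]; lia.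
  have /eqP Hs : size w == 2%N.
    by apply/negPn/negP => /Hz Hzw0; rewrite Hzw0 eqxx in Hw.
  exists 2%N; split => //; split => //; exists w; split => //; split => //.
  move=> m f /andP [H1 H2] Hf x Hx.
  have Hm : m = 1%N by lia.
  rewrite Hm in Hf.
  have key : forall a b c, z [:: a; b] * f [:: c] = f [:: a] * z [:: b; c].
    by move=> a b c; have := Hf [:: a; b; c] erefl; rewrite /Lf /Rf /=.
  have H2K : (2%:R : K) != 0.
    by move: (Hchar 2%N); rewrite !inE /= => ->.
  case: w Hs Hw => [|i [|j [|]]] //= _ Hw.
  have Hfi : f [:: i] = 0.
    have E : z [:: i; j] * f [:: i] *+ 2 = 0.
      rewrite mulr2n {2}(key i j i) (Hanti j i) mulrN [f [:: i] * _]mulrC subrr //.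
    move/eqP: E; rewrite -mulr_natr mulf_eq0 (negbTE H2K) orbF mulf_eq0 (negbTE Hw) /=.
    by move/eqP.
  move: Hx; rewrite Hm; case: x => [|c [|]] //= _.
  have := key i j c; rewrite Hfi mul0r => /eqP; rewrite mulf_eq0 (negbTE Hw) /=.
  by move/eqP.
rewrite (comm_of He Hz); split.
  exact: (forward He Hz Hw0 Hzw Hsmall).
exact: (backward He Hz).
Qed.
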